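(* Let $I$ be a finite nonempty set and let $\phi=\bigwedge_{i\in I}\phi_i$, where each $\phi_i$ is a formula of the intuitionistic propositional calculus that is disjunctive in the variable $x$. Let $N$ be the number of distinct head subformulas and $M$ the number of distinct side subformulas occurring in any of the $\phi_i$. Then $\rho(\phi)\le (N+1)(M+1)$.
   Context: Formulas of the intuitionistic propositional calculus (IPC) are built from propositional variables, $\top,\bot,\wedge,\vee,\to$. For a formula $\phi$ containing the variable $x$, define $\phi^0=x$ and $\phi^{n+1}=\phi[\phi^n/x]$ (substitution of $\phi^n$ for $x$ in $\phi$). The Ruitenburg number $\rho(\phi)$ is the least $n\ge 0$ such that $\phi^{n+2}$ and $\phi^n$ are provably equivalent in IPC. A formula is disjunctive in $x$ if it is generated by the grammar $\phi ::= x \mid \alpha\to\phi \mid \beta\vee\phi \mid \phi\vee\phi$, where $\alpha,\beta$ range over IPC formulas not containing $x$ (disjunctions taken up to commutativity). In the parse of a disjunctive formula, each formula $\alpha$ used in a production $\alpha\to\phi'$ is a head subformula, and each formula $\beta$ used in a production $\beta\vee\phi'$ is a side subformula. *)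

(* Defs.v *)
From Stdlib Require Import List Arith.
Import ListNotations.

Inductive form : Type :=
| Var : nat -> form
| Top : form
| Bot : form
| And : form -> form -> form
| Or  : form -> form -> form
| Imp : form -> form -> form.

Definition form_eq_dec : forall a b : form, {a = b} + {a <> b}.
Proof. decide equality; apply Nat.eq_dec. Defined.

Inductive nd : list form -> form -> Prop :=
| nd_ax   : forall G A, In A G -> nd G A
| nd_topI : forall G, nd G Top
| nd_botE : forall G A, nd G Bot -> nd G A
| nd_andI : forall G A B, nd G A -> nd G B -> nd G (And A B)
| nd_andE1 : forall G A B, nd G (And A B) -> nd G A
| nd_andE2 : forall G A B, nd G (And A B) -> nd G B
| nd_orI1 : forall G A B, nd G A -> nd G (Or A B)
| nd_orI2 : forall G A B, nd G B -> nd G (Or A B)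
| nd_orE  : forall G A B C, nd G (Or A B) -> nd (A :: G) C -> nd (B :: G) C -> nd G C
| nd_impI : forall G A B, nd (A :: G) B -> nd G (Imp A B)
| nd_impE : forall G A B, nd G (Imp A B) -> nd G A -> nd G B.

Definition provable (A : form) : Prop := nd [] A.

Definition ipc_equiv (A B : form) : Prop := provable (Imp A B) /\ provable (Imp B A).

Fixpoint occurs (x : nat) (A : form) : bool :=
  match A with
  | Var y => Nat.eqb x y
  | Top | Bot => false
  | And A B | Or A B | Imp A B => occurs x A || occurs x B
  end.

Fixpoint subst (x : nat) (B : form) (A : form) : form :=
  match A with
  | Var y => if Nat.eqb x y then B else Var y
  | Top => Top
  | Bot => Bot
  | And A1 A2 => And (subst x B A1) (subst x B A2)
  | Or A1 A2 => Or (subst x B A1) (subst x B A2)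
  | Imp A1 A2 => Imp (subst x B A1) (subst x B A2)
  end.

Fixpoint iter_form (x : nat) (phi : form) (n : nat) : form :=
  match n with
  | 0 => Var x
  | S n => subst x (iter_form x phi n) phi
  end.

(* rho(phi) <= k : the least n with phi^(n+2) ~ phi^n is at most k, i.e.
   some n <= k satisfies phi^(n+2) ~ phi^n. *)
Definition ruitenburg_le (x : nat) (phi : form) (k : nat) : Prop :=
  exists n, n <= k /\ ipc_equiv (iter_form x phi (n + 2)) (iter_form x phi n).

(* Disjunctive formulas in x:  phi ::= x | alpha -> phi | beta \/ phi | phi \/ phi
   (x not in alpha, beta; disjunction up to commutativity). *)
Inductive disjunctive (x : nat) : form -> Prop :=
| dj_var : disjunctive x (Var x)
| dj_imp : forall a p, occurs x a = false -> disjunctive x p -> disjunctive x (Imp a p)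
| dj_sideL : forall b p, occurs x b = false -> disjunctive x p -> disjunctive x (Or b p)
| dj_sideR : forall b p, occurs x b = false -> disjunctive x p -> disjunctive x (Or p b)
| dj_or : forall p q, disjunctive x p -> disjunctive x q -> disjunctive x (Or p q).

(* Every disjunctive formula contains x, so its parse is unique: in a
   disjunction, a disjunct not containing x is a side subformula. *)
Fixpoint heads (x : nat) (A : form) : list form :=
  match A with
  | Imp a p => a :: heads x p
  | Or p q =>
      if occurs x p then (if occurs x q then heads x p ++ heads x q else heads x p)
      else heads x q
  | _ => []
  end.

Fixpoint sides (x : nat) (A : form) : list form :=
  match A with
  | Imp a p => sides x p
  | Or p q =>
      if occurs x p then (if occurs x q then sides x p ++ sides x q else q :: sides x p)
      else p :: sides x q
  | _ => []
  end.

Fixpoint bigAnd (l : list form) : form :=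
  match l with
  | [] => Top
  | [a] => a
  | a :: l => And a (bigAnd l)
  end.

Definition num_distinct (l : list form) : nat := length (nodup form_eq_dec l).

(* Main.v *)
Require Import Defs.
From Stdlib Require Import List Arith Lia Bool.
Import ListNotations.

Lemma incl_cc {A} (a : A) G G' : incl G G' -> incl (a :: G) (a :: G').
Proof. intros H; apply incl_cons; [left; auto | apply incl_tl; auto]. Qed.

Lemma weak : forall G A, nd G A -> forall G', incl G G' -> nd G' A.
Proof.
  intros G A H; induction H; intros G' Hi.
  - apply nd_ax; auto.
  - apply nd_topI.
  - apply nd_botE; auto.
  - apply nd_andI; auto.
  - eapply nd_andE1; eauto.
  - eapply nd_andE2; eauto.
  - apply nd_orI1; auto.
  - apply nd_orI2; auto.
  - eapply nd_orE; [eauto | apply IHnd2 | apply IHnd3]; apply incl_cc; auto.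
  - apply nd_impI; apply IHnd; apply incl_cc; auto.
  - eapply nd_impE; eauto.
Qed.

Lemma cut G A B : nd G A -> nd (A :: G) B -> nd G B.
Proof. intros H1 H2; eapply nd_impE; [apply nd_impI; exact H2 | exact H1]. Qed.

Definition le G A B := nd (A :: G) B.
Definition eqv G A B := le G A B /\ le G B A.

Lemma le_app G Γ A B : le G A B -> nd Γ A -> incl G Γ -> nd Γ B.
Proof. intros H1 H2 Hi; eapply cut; [exact H2|]. eapply weak; [exact H1|]. apply incl_cc; auto. Qed.

Lemma axx G A : In A G -> nd G A.
Proof. apply nd_ax. Qed.

Ltac ax := apply nd_ax; simpl; tauto.
Ltac inc := intros ? ?; simpl in *; tauto.

Lemma le_refl G A : le G A A. Proof. unfold le; ax. Qed.
Lemma le_trans G A B C : le G A B -> le G B C -> le G A C.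
Proof. intros H1 H2. unfold le. eapply le_app; [exact H2| exact H1| inc]. Qed.
Lemma eqv_refl G A : eqv G A A. Proof. split; apply le_refl. Qed.
Lemma eqv_sym G A B : eqv G A B -> eqv G B A. Proof. intros [? ?]; split; auto. Qed.
Lemma eqv_trans G A B C : eqv G A B -> eqv G B C -> eqv G A C.
Proof. intros [? ?] [? ?]; split; eapply le_trans; eauto. Qed.
Lemma le_weak G G' A B : le G A B -> incl G G' -> le G' A B.
Proof. intros H Hi; eapply weak; [exact H | apply incl_cc; auto]. Qed.
Lemma eqv_weak G G' A B : eqv G A B -> incl G G' -> eqv G' A B.
Proof. intros [? ?] Hi; split; eapply le_weak; eauto. Qed.

Lemma le_and G A A' B B' : le G A A' -> le G B B' -> le G (And A B) (And A' B').
Proof.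
  intros H1 H2; unfold le; apply nd_andI.
  - eapply le_app; [exact H1| eapply nd_andE1; ax | inc].
  - eapply le_app; [exact H2| eapply nd_andE2; ax | inc].
Qed.
Lemma le_or G A A' B B' : le G A A' -> le G B B' -> le G (Or A B) (Or A' B').
Proof.
  intros H1 H2; unfold le; eapply nd_orE; [ax| |].
  - apply nd_orI1; eapply le_app; [exact H1| ax| inc].
  - apply nd_orI2; eapply le_app; [exact H2| ax| inc].
Qed.
Lemma le_imp G A1 A2 B1 B2 : le G A2 A1 -> le G B1 B2 -> le G (Imp A1 B1) (Imp A2 B2).
Proof.
  intros H1 H2; unfold le; apply nd_impI.
  eapply le_app; [exact H2| |inc].
  eapply nd_impE; [ax|]. eapply le_app; [exact H1|ax|inc].
Qed.
Lemma le_imp_ctx G c P P' : le (c :: G) P P' -> le G (Imp c P) (Imp c P').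
Proof.
  intros H; unfold le; apply nd_impI.
  eapply le_app; [exact H| |inc].
  eapply nd_impE; ax.
Qed.
Lemma eqv_imp_ctx G c P P' : eqv (c :: G) P P' -> eqv G (Imp c P) (Imp c P').
Proof. intros [? ?]; split; apply le_imp_ctx; auto. Qed.
Lemma bot_le G Y : le G Bot Y. Proof. unfold le; apply nd_botE; ax. Qed.

Lemma subst_cong x G P Q : eqv G P Q -> forall C, eqv G (subst x P C) (subst x Q C).
Proof.
  intros HPQ C; induction C; simpl.
  - destruct (Nat.eqb x n); auto using eqv_refl.
  - apply eqv_refl.
  - apply eqv_refl.
  - destruct IHC1, IHC2; split; apply le_and; auto.
  - destruct IHC1, IHC2; split; apply le_or; auto.
  - destruct IHC1, IHC2; split; apply le_imp; auto.
Qed.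

Lemma subst_nocc x Y C : occurs x C = false -> subst x Y C = C.
Proof.
  induction C; simpl; intros H; auto;
  try (apply orb_false_iff in H; destruct H; rewrite IHC1, IHC2; auto).
  rewrite H; auto.
Qed.

Fixpoint good x F : Prop := match F with
  | Imp c p => occurs x c = false /\ good x p
  | And p q | Or p q => good x p /\ good x q
  | _ => True end.
Fixpoint dj x F : Prop := match F with
  | Var v => v = x
  | Imp c p => dj x p
  | And p q => dj x p /\ dj x q
  | Or p q => dj x p \/ dj x q
  | _ => False end.
Fixpoint hs x F : list form := match F with
  | Imp a p => if occurs x p then a :: hs x p else []
  | And p q | Or p q => hs x p ++ hs x q
  | _ => [] end.
Fixpoint rem a F := match F with
  | Imp c p => if form_eq_dec c a then rem a p else Imp c (rem a p)
  | And p q => And (rem a p) (rem a q)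
  | Or p q => Or (rem a p) (rem a q)
  | _ => F end.

Lemma infl x F : dj x F -> forall G Y, le G Y (subst x Y F).
Proof.
  induction F; simpl; intros Hd G Y; try contradiction.
  - subst n; rewrite Nat.eqb_refl; apply le_refl.
  - destruct Hd as [H1 H2]; unfold le; apply nd_andI; [apply IHF1|apply IHF2]; auto.
  - unfold le; destruct Hd as [H|H]; [apply nd_orI1; apply IHF1|apply nd_orI2; apply IHF2]; auto.
  - unfold le; apply nd_impI. eapply le_app; [apply (IHF2 Hd G Y)| ax| inc].
Qed.

Lemma good_rem x a F : good x F -> good x (rem a F).
Proof. induction F; simpl; intuition; destruct form_eq_dec; simpl; intuition. Qed.
Lemma dj_rem x a F : dj x F -> dj x (rem a F).
Proof. induction F; simpl; intuition; destruct form_eq_dec; simpl; intuition. Qed.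
Lemma occ_rem x a F : occurs x (rem a F) = true -> occurs x F = true.
Proof.
  induction F; simpl; intros H; auto; try (apply orb_true_iff in H; apply orb_true_iff; intuition).
  destruct form_eq_dec; simpl in *; apply orb_true_iff; [intuition|].
  apply orb_true_iff in H; intuition.
Qed.
Lemma hs_nocc x F : occurs x F = false -> hs x F = [].
Proof.
  induction F; simpl; intros H; auto;
  apply orb_false_iff in H; destruct H; try (rewrite IHF1, IHF2; auto).
  rewrite H0; auto.
Qed.
Lemma hs_rem x a F c : In c (hs x (rem a F)) -> In c (hs x F) /\ c <> a.
Proof.
  induction F; simpl; intros H; try contradiction.
  - apply in_app_or in H; destruct H as [H|H]; [apply IHF1 in H|apply IHF2 in H];
    intuition; apply in_or_app; auto.
  - apply in_app_or in H; destruct H as [H|H]; [apply IHF1 in H|apply IHF2 in H];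
    intuition; apply in_or_app; auto.
  - destruct form_eq_dec as [e|e].
    + subst F1. destruct (occurs x F2) eqn:E.
      * apply IHF2 in H; simpl; intuition.
      * assert (E' : occurs x (rem a F2) = false).
        { destruct (occurs x (rem a F2)) eqn:E2; auto. apply occ_rem in E2; congruence. }
        rewrite (hs_nocc _ _ E') in H; contradiction.
    + simpl in H. destruct (occurs x (rem a F2)) eqn:E2; [|contradiction].
      rewrite (occ_rem _ _ _ E2). simpl in H; destruct H as [H|H].
      * subst; simpl; auto.
      * apply IHF2 in H; simpl; intuition.
Qed.

Lemma rem_equiv x a F : good x F -> forall G Y, eqv (a :: G) (subst x Y F) (subst x Y (rem a F)).
Proof.
  induction F; simpl; intros Hg G Y; try apply eqv_refl.
  - destruct Hg; destruct (IHF1 H G Y), (IHF2 H0 G Y); split; apply le_and; auto.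
  - destruct Hg; destruct (IHF1 H G Y), (IHF2 H0 G Y); split; apply le_or; auto.
  - destruct Hg as [Hc Hp]. destruct (IHF2 Hp G Y) as [H1 H2].
    destruct form_eq_dec as [e|e].
    + subst F1. rewrite (subst_nocc _ _ _ Hc). split; unfold le.
      * eapply le_app; [exact H1| eapply nd_impE; ax| inc].
      * apply nd_impI. eapply le_app; [exact H2| ax| inc].
    + simpl. rewrite (subst_nocc _ _ _ Hc). split; apply le_imp; auto using le_refl.
Qed.

Lemma iter_rem x a F : good x F -> forall n G,
  eqv (a :: G) (iter_form x F n) (iter_form x (rem a F) n).
Proof.
  intros Hg n G; induction n; simpl.
  - apply eqv_refl.
  - eapply eqv_trans; [apply rem_equiv; auto|].
    apply subst_cong; auto.
Qed.

Fixpoint tsub x Y W F := match F with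
  | Var v => if Nat.eqb x v then W else Var v
  | And p q => And (tsub x Y W p) (tsub x Y W q)
  | Or p q => Or (tsub x Y W p) (tsub x Y W q)
  | Imp c p => subst x Y (Imp c p)
  | Top => Top | Bot => Bot end.

Lemma tsub_subst x Y F : tsub x Y Y F = subst x Y F.
Proof. induction F; simpl; congruence. Qed.

Lemma tsub_mono x G Y W W' F : le G W W' -> le G (tsub x Y W F) (tsub x Y W' F).
Proof.
  intros H; induction F as [n| | | | |]; simpl; auto using le_refl, le_and, le_or.
  destruct (Nat.eqb x n); auto using le_refl.
Qed.

Lemma tsub_absorb x G Y W F : le G (tsub x Y W F) (Or (tsub x Y Bot F) W).
Proof.
  unfold le; induction F; simpl.
  - destruct (Nat.eqb x n); [apply nd_orI2 | apply nd_orI1]; ax.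
  - apply nd_orI1; apply nd_topI.
  - apply nd_orI1; ax.
  - eapply nd_orE; [eapply le_app; [exact IHF1| eapply nd_andE1; ax| inc]| |].
    + eapply nd_orE; [eapply le_app; [exact IHF2| eapply nd_andE2; ax| inc]| |].
      * apply nd_orI1; apply nd_andI; ax.
      * apply nd_orI2; ax.
    + apply nd_orI2; ax.
  - eapply nd_orE; [ax| |].
    + eapply nd_orE; [eapply le_app; [exact IHF1| ax| inc]| |].
      * apply nd_orI1; apply nd_orI1; ax.
      * apply nd_orI2; ax.
    + eapply nd_orE; [eapply le_app; [exact IHF2| ax| inc]| |].
      * apply nd_orI1; apply nd_orI2; ax.
      * apply nd_orI2; ax.
  - apply nd_orI1; ax.
Qed.

Lemma tsub_agree x G Y Y' W F : good x F ->
  (forall a, In a (hs x F) -> eqv (a :: G) Y Y') ->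
  eqv G (tsub x Y W F) (tsub x Y' W F).
Proof.
  induction F; simpl; intros Hg Ha; try apply eqv_refl.
  - destruct Hg.
    destruct (IHF1 H (fun a h => Ha a (in_or_app _ _ _ (or_introl h)))).
    destruct (IHF2 H0 (fun a h => Ha a (in_or_app _ _ _ (or_intror h)))).
    split; apply le_and; auto.
  - destruct Hg.
    destruct (IHF1 H (fun a h => Ha a (in_or_app _ _ _ (or_introl h)))).
    destruct (IHF2 H0 (fun a h => Ha a (in_or_app _ _ _ (or_intror h)))).
    split; apply le_or; auto.
  - destruct Hg as [Hc Hp]. rewrite !(subst_nocc _ _ _ Hc).
    destruct (occurs x F2) eqn:E.
    + apply eqv_imp_ctx. apply subst_cong. apply Ha; left; auto.
    + rewrite !(subst_nocc _ _ _ E). apply eqv_refl.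
Qed.

Lemma key x G F Y : dj x F -> good x F ->
  (forall a, In a (hs x F) -> eqv (a :: G) Y (subst x Y F)) ->
  eqv G (subst x (subst x Y F) F) (subst x Y F).
Proof.
  intros Hd Hg Ha. set (Z := subst x Y F). split; [|apply infl; auto].
  rewrite <- tsub_subst.
  eapply le_trans; [apply (tsub_agree x G Z Y Z F Hg); intros a h; apply eqv_sym, Ha, h|].
  eapply le_trans; [apply tsub_absorb|].
  eapply le_trans; [apply le_or; [apply tsub_mono; apply (bot_le G Y)| apply le_refl]|].
  rewrite tsub_subst. fold Z. unfold le. eapply nd_orE; ax.
Qed.

Lemma stab x k F G : dj x F -> good x F ->
  (forall a, In a (hs x F) -> forall m, k <= m ->
     eqv (a :: G) (iter_form x F m) (iter_form x F k)) ->
  forall m, S k <= m -> eqv G (iter_form x F m) (iter_form x F (S k)).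
Proof.
  intros Hd Hg HA.
  assert (step : forall m, k <= m -> eqv G (iter_form x F (S (S m))) (iter_form x F (S m))).
  { intros m Hm. simpl. apply key; auto. intros a h.
    eapply eqv_trans; [apply (HA a h m Hm)|]. apply eqv_sym. apply (HA a h (S m)); lia. }
  assert (D : forall d, eqv G (iter_form x F (S k + d)) (iter_form x F (S k))).
  { induction d.
    - rewrite Nat.add_0_r; apply eqv_refl.
    - rewrite Nat.add_succ_r. eapply eqv_trans; [|exact IHd].
      apply (step (k + d)); lia. }
  intros m Hm. replace m with (S k + (m - S k)) by lia. apply D.
Qed.

Lemma main x : forall k L F G, length L <= k -> dj x F -> good x F -> incl (hs x F) L ->
  forall m, S k <= m -> eqv G (iter_form x F m) (iter_form x F (S k)).
Proof.
  induction k; intros L F G HL Hd Hg Hi; apply stab; auto.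
  - intros a h. apply Hi in h. destruct L; simpl in *; [contradiction| lia].
  - intros a h m Hm. pose proof (Hi a h) as haL.
    assert (HL' : length (remove form_eq_dec a L) <= k).
    { pose proof (remove_length_lt form_eq_dec L a haL); lia. }
    assert (Hi' : incl (hs x (rem a F)) (remove form_eq_dec a L)).
    { intros c hc. apply hs_rem in hc. destruct hc. apply in_in_remove; auto. }
    pose proof (IHk _ _ (a :: G) HL' (dj_rem x a F Hd) (good_rem x a F Hg) Hi' m Hm) as R.
    eapply eqv_trans; [apply iter_rem; auto|].
    eapply eqv_trans; [exact R|]. apply eqv_sym, iter_rem; auto.
Qed.

Lemma nocc_good x b : occurs x b = false -> good x b.
Proof.
  induction b; simpl; intros H; auto; apply orb_false_iff in H; intuition.
Qed.

Lemma disj_occ x D : disjunctive x D -> occurs x D = true.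
Proof.
  induction 1; simpl; try rewrite IHdisjunctive; try rewrite IHdisjunctive1;
  rewrite ?orb_true_r; auto. apply Nat.eqb_refl.
Qed.

Lemma disj_cls x D : disjunctive x D -> dj x D /\ good x D.
Proof.
  induction 1; simpl; intuition; apply nocc_good; auto.
Qed.

Lemma hs_heads x D : disjunctive x D -> incl (hs x D) (heads x D).
Proof.
  induction 1; simpl.
  - inc.
  - rewrite (disj_occ _ _ H0). apply incl_cc; auto.
  - rewrite (hs_nocc _ _ H), H. simpl. auto.
  - rewrite (hs_nocc _ _ H), H, (disj_occ _ _ H0), app_nil_r. auto.
  - rewrite (disj_occ _ _ H), (disj_occ _ _ H0). apply incl_app_app; auto.
Qed.

Lemma bigAnd_cls x ps : ps <> [] -> (forall p, In p ps -> dj x p /\ good x p) ->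
  dj x (bigAnd ps) /\ good x (bigAnd ps).
Proof.
  induction ps as [|a ps IH]; intros Hn H; [congruence|].
  destruct ps as [|b l].
  - apply H; left; auto.
  - assert (Ha := H a (or_introl eq_refl)).
    assert (Hr : dj x (bigAnd (b :: l)) /\ good x (bigAnd (b :: l))).
    { apply IH; [congruence| intros p hp; apply H; right; auto]. }
    change (bigAnd (a :: b :: l)) with (And a (bigAnd (b :: l))).
    simpl; intuition.
Qed.

Lemma hs_bigAnd x ps : incl (hs x (bigAnd ps)) (flat_map (hs x) ps).
Proof.
  induction ps as [|a ps IH]; [simpl; inc|].
  destruct ps as [|b l].
  - simpl. rewrite app_nil_r. inc.
  - change (bigAnd (a :: b :: l)) with (And a (bigAnd (b :: l))).
    simpl hs. change (flat_map (hs x) (a :: b :: l)) with (hs x a ++ flat_map (hs x) (b :: l)).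
    apply incl_app_app; auto. inc.
Qed.

Theorem mainTheorem1 (x : nat) (phis : list form) :
  phis <> [] ->
  (forall p, In p phis -> disjunctive x p) ->
  ruitenburg_le x (bigAnd phis)
    ((num_distinct (flat_map (heads x) phis) + 1) *
     (num_distinct (flat_map (sides x) phis) + 1)).
Proof.
  intros Hne Hd.
  destruct (bigAnd_cls x phis Hne (fun p h => disj_cls x p (Hd p h))) as [Hdj Hg].
  set (L := nodup form_eq_dec (flat_map (heads x) phis)).
  assert (Hi : incl (hs x (bigAnd phis)) L).
  { intros c hc. apply hs_bigAnd in hc. apply nodup_In. apply in_flat_map in hc.
    destruct hc as [p [hp hc]]. apply in_flat_map. exists p; split; auto.
    apply (hs_heads x p (Hd p hp)); auto. }
  pose proof (main x (length L) L (bigAnd phis) [] (le_n _) Hdj Hg Hi) as M.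
  unfold ruitenburg_le. exists (S (length L)). split.
  - unfold num_distinct. fold L. nia.
  - destruct (M (S (length L) + 2) ltac:(lia)) as [H1 H2].
    split; apply nd_impI; auto.
Qed.
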